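(* Let $\mathcal{H}_1,\mathcal{H}_2$ be finite-dimensional Hilbert spaces, $m$ a positive integer, and $\mathcal{O}^{(\mathrm{CP})}_{\mathrm{F}}(\mathcal{H}_1\to\mathcal{H}_2)\subseteq\mathcal{O}^{(\mathrm{CP})}(\mathcal{H}_1\to\mathcal{H}_2)$ a set of free completely positive trace-nonincreasing maps. Let $(\mathcal{E}_i)_{i=0}^{m-1}\in\mathcal{O}^{(m)}(\mathcal{H}_1\to\mathcal{H}_2)$ be a quantum instrument. Let $\mathcal{H}_3$ be an $m$-dimensional Hilbert space with orthonormal basis $\{|i\rangle\}_{i=0}^{m-1}$, and for an instrument $(\mathcal{E}_i)_i$ define the channel $\Lambda_{(\mathcal{E}_i)_i}\in\mathcal{O}(\mathcal{H}_1\to\mathcal{H}_3\otimes\mathcal{H}_2)$ by $\Lambda_{(\mathcal{E}_i)_i}(\rho)=\sum_{i=0}^{m-1}|i\rangle\langle i|\otimes\mathcal{E}_i(\rho)$. Let \[\mathcal{O}_{\mathrm{F}}=\Big\{\Lambda_{(\mathcal{E}'_i)_i}:\ \mathcal{E}'_i\in\mathcal{O}^{(\mathrm{CP})}_{\mathrm{F}}(\mathcal{H}_1\to\mathcal{H}_2)\ \forall i,\ \textstyle\sum_{i=0}^{m-1}\mathcal{E}'_i\in\mathcal{O}(\mathcal{H}_1\to\mathcal{H}_2)\Big\}.\] Then $R_{\mathcal{O}^{(\mathrm{CP})}_{\mathrm{F}}}((\mathcal{E}_i)_i)=R_{\mathcal{O}_{\mathrm{F}}}(\Lambda_{(\mathc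al{E}_i)_i})$.
   Context: $\mathcal{O}(\mathcal{H}\to\mathcal{K})$ denotes quantum channels (CPTP maps) and $\mathcal{O}^{(\mathrm{CP})}(\mathcal{H}\to\mathcal{K})$ completely positive trace-nonincreasing maps. A quantum instrument with $m$ elements is a family $(\mathcal{E}_i)_{i=0}^{m-1}$ of maps in $\mathcal{O}^{(\mathrm{CP})}(\mathcal{H}_1\to\mathcal{H}_2)$ with $\sum_i\mathcal{E}_i\in\mathcal{O}(\mathcal{H}_1\to\mathcal{H}_2)$; the set of these is $\mathcal{O}^{(m)}(\mathcal{H}_1\to\mathcal{H}_2)$. Generalized robustness of an instrument: $R_{\mathcal{O}^{(\mathrm{CP})}_{\mathrm{F}}}((\mathcal{E}_i)_i)=\min\{s\ge0:\exists(\mathcal{G}_i)_i\in\mathcal{O}^{(m)}(\mathcal{H}_1\to\mathcal{H}_2),\ \frac{\mathcal{E}_i+s\mathcal{G}_i}{1+s}\in\mathcal{O}^{(\mathrm{CP})}_{\mathrm{F}}(\mathcal{H}_1\to\mathcal{H}_2)\ \forall i\}$. Generalized robustness of a channel $\Lambda$ with respect to a set $\mathcal{G}$ of channels from $\mathcal{H}_1$ to $\mathcal{H}_3\otimes\mathcal{H}_2$: $R_{\mathcal{G}}(\Lambda)=\min\{s\ge0:\exists\Theta\in\mathcal{O}(\mathcal{H}_1\to\mathcal{H}_3\otimes\mathcal{H}_2),\ \frac{\Lambda+s\Theta}{1+s}\in\mathcal{G}\}$. *)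

(* Defs.v *)
From HB Require Import structures.
From mathcomp Require Import all_boot all_order all_algebra.
From mathcomp Require Import complex mxtens.
From mathcomp Require Import all_classical all_reals ereal.
Set Implicit Arguments. Unset Strict Implicit. Unset Printing Implicit Defensive.
Import Order.TTheory GRing.Theory Num.Theory.
Local Open Scope ring_scope.

Section Quantum.
Variable R : realType.
Local Notation C := (R[i]).

Definition hadj m n (A : 'M[C]_(m, n)) : 'M[C]_(n, m) := (map_mx (@Num.conj C) A)^T.

(* positive semidefinite: <v, A v> is a nonnegative real for every vector v
   (in the partial order of C, 0 <= z means z is real and nonnegative) *)
Definition psd d (A : 'M[C]_d) : Prop :=
  forall v : 'cV[C]_d, 0 <= (hadj v *m A *m v) 0 0.

Definition linmap d1 d2 := 'M[C]_d1 -> 'M[C]_d2.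

Definition is_linear d1 d2 (f : linmap d1 d2) : Prop :=
  forall (a : C) (X Y : 'M[C]_d1), f (a *: X + Y) = a *: f X + f Y.

Definition block k d (a b : 'I_k) (X : 'M[C]_(k * d)) : 'M[C]_d :=
  \matrix_(i, j) X (mxtens_index (a, i)) (mxtens_index (b, j)).

(* (id_k (x) f)(X) for X on C^k (x) C^d1 *)
Definition ampl k d1 d2 (f : linmap d1 d2) (X : 'M[C]_(k * d1)) : 'M[C]_(k * d2) :=
  \sum_(a < k) \sum_(b < k) (delta_mx a b *t f (block a b X)).

Definition is_positive d1 d2 (f : linmap d1 d2) : Prop :=
  forall X, psd X -> psd (f X).

Definition is_CP d1 d2 (f : linmap d1 d2) : Prop :=
  forall k (X : 'M[C]_(k * d1)), psd X -> psd (ampl f X).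

Definition is_TP d1 d2 (f : linmap d1 d2) : Prop :=
  forall X, \tr (f X) = \tr X.

Definition is_TNI d1 d2 (f : linmap d1 d2) : Prop :=
  forall X, psd X -> \tr (f X) <= \tr X.

Definition channel d1 d2 (f : linmap d1 d2) : Prop :=
  [/\ is_linear f, is_CP f & is_TP f].

Definition CPTNI d1 d2 (f : linmap d1 d2) : Prop :=
  [/\ is_linear f, is_CP f & is_TNI f].

Definition sum_maps m d1 d2 (E : 'I_m -> linmap d1 d2) : linmap d1 d2 :=
  fun X => \sum_(i < m) E i X.

Definition instrument m d1 d2 (E : 'I_m -> linmap d1 d2) : Prop :=
  (forall i, CPTNI (E i)) /\ channel (sum_maps E).

Definition mixmap d1 d2 (s : R) (f g : linmap d1 d2) : linmap d1 d2 :=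
  fun X => (1 + (s%:C)%C)^-1 *: (f X + (s%:C)%C *: g X).

Definition feasible_inst m d1 d2 (Free : linmap d1 d2 -> Prop)
    (E : 'I_m -> linmap d1 d2) (s : R) : Prop :=
  0 <= s /\ exists G : 'I_m -> linmap d1 d2,
    instrument G /\ forall i, Free (mixmap s (E i) (G i)).

Definition robustness_inst m d1 d2 (Free : linmap d1 d2 -> Prop)
    (E : 'I_m -> linmap d1 d2) : \bar R :=
  ereal_inf [set (s%:E)%E | s in feasible_inst Free E].

Definition feasible_chan d1 d3 (G : linmap d1 d3 -> Prop) (L : linmap d1 d3) (s : R) : Prop :=
  0 <= s /\ exists Th : linmap d1 d3, channel Th /\ G (mixmap s L Th).

Definition robustness_chan d1 d3 (G : linmap d1 d3 -> Prop) (L : linmap d1 d3) : \bar R :=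
  ereal_inf [set (s%:E)%E | s in feasible_chan G L].

Definition Lambda m d1 d2 (E : 'I_m -> linmap d1 d2) : linmap d1 (m * d2) :=
  fun rho => \sum_(i < m) (delta_mx i i *t E i rho).

Definition free_chan m d1 d2 (Free : linmap d1 d2 -> Prop) : linmap d1 (m * d2) -> Prop :=
  fun L => exists E' : 'I_m -> linmap d1 d2,
    (forall i, Free (E' i)) /\ channel (sum_maps E') /\ L = Lambda E'.

End Quantum.

(* Main.v *)
Require Import Defs.
From HB Require Import structures.
From mathcomp Require Import all_boot all_order all_algebra.
From mathcomp Require Import complex mxtens.
From mathcomp Require Import all_classical all_reals ereal.
Import Order.TTheory GRing.Theory Num.Theory.
Local Open Scope ring_scope.
Set Implicit Arguments. Unset Strict Implicit. Unset Printing Implicit Defensive.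

Section H.
Variable R : realType.
Local Notation C := (R[i]).

Lemma hadj_mul m n p (A : 'M[C]_(m, n)) (B : 'M[C]_(n, p)) :
  hadj (A *m B) = hadj B *m hadj A.
Proof. by rewrite /hadj map_mxM trmx_mul. Qed.

Lemma psd_conj n k (M : 'M[C]_n) (P : 'M[C]_(n, k)) :
  psd M -> psd (hadj P *m M *m P).
Proof.
move=> HM v; have := HM (P *m v).
by rewrite hadj_mul !mulmxA.
Qed.

Lemma psd_add n (A B : 'M[C]_n) : psd A -> psd B -> psd (A + B).
Proof.
move=> HA HB v; rewrite mulmxDr mulmxDl mxE; exact: addr_ge0.
Qed.

Lemma psd_scale n (c : C) (A : 'M[C]_n) : 0 <= c -> psd A -> psd (c *: A).
Proof.
move=> Hc HA v; rewrite -scalemxAr -scalemxAl mxE; exact: mulr_ge0.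
Qed.

Lemma psd0 n : psd (0 : 'M[C]_n).
Proof. by move=> v; rewrite mulmx0 mul0mx mxE. Qed.

Lemma psd_sum n (I : finType) (F : I -> 'M[C]_n) :
  (forall i, psd (F i)) -> psd (\sum_i F i).
Proof.
move=> HF; apply: (@big_ind _ (fun A : 'M[C]_n => psd A)) => //; [exact: psd0| exact: psd_add].
Qed.

Lemma hadj_delta m n (i : 'I_m) (j : 'I_n) : hadj (delta_mx i j : 'M[C]_(m, n)) = delta_mx j i.
Proof.
by apply/matrixP => a b; rewrite !mxE conjC_nat andbC.
Qed.

Lemma psd_diag n (M : 'M[C]_n) i : psd M -> 0 <= M i i.
Proof.
move=> HM; have := HM (delta_mx i 0).
by rewrite hadj_delta -rowE -colE !mxE.
Qed.

Lemma psd_tr n (M : 'M[C]_n) : psd M -> 0 <= \tr M.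
Proof. by move=> HM; rewrite /mxtrace; apply: sumr_ge0 => i _; apply: psd_diag. Qed.


Lemma idx_inj m n : injective (@mxtens_index m n).
Proof. exact: can_inj (@mxtens_indexK m n). Qed.

Lemma sum_delta (I : finType) (a : I) (F : I -> C) :
  \sum_x ((x == a)%:R * F x) = F a.
Proof.
rewrite (bigD1 a) //= eqxx mul1r big1 ?addr0 // => x /negbTE ->; by rewrite mul0r.
Qed.

Lemma tensE m n p q (A : 'M[C]_(m, n)) (B : 'M[C]_(p, q)) x y :
  (A *t B) x y = A (mxtens_unindex x).1 (mxtens_unindex y).1
                 * B (mxtens_unindex x).2 (mxtens_unindex y).2.
Proof. by rewrite mxE. Qed.

Lemma amplE k d1 d2 (f : linmap R d1 d2) (X : 'M[C]_(k * d1)) x y :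
  ampl f X x y = f (block (mxtens_unindex x).1 (mxtens_unindex y).1 X)
                   (mxtens_unindex x).2 (mxtens_unindex y).2.
Proof.
rewrite /ampl summxE.
under eq_bigr do rewrite summxE.
under eq_bigr do under eq_bigr do rewrite tensE mxE.
transitivity (\sum_a ((a == (mxtens_unindex x).1)%:R * \sum_b ((b == (mxtens_unindex y).1)%:R *
   f (block a b X) (mxtens_unindex x).2 (mxtens_unindex y).2))); last by rewrite sum_delta sum_delta.
apply: eq_bigr => a _; rewrite mulr_sumr.
apply: eq_bigr => b _.
by rewrite mulrA -natrM mulnb [(_ == a)]eq_sym [(_ == b)]eq_sym.
Qed.

Lemma amplE2 k d1 d2 (f : linmap R d1 d2) (X : 'M[C]_(k * d1)) a b j l :
  ampl f X (mxtens_index (a, j)) (mxtens_index (b, l)) = f (block a b X) j l.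
Proof. by rewrite amplE !mxtens_indexK. Qed.

Lemma blockE k d (a b : 'I_k) (X : 'M[C]_(k * d)) u v :
  block a b X u v = X (mxtens_index (a, u)) (mxtens_index (b, v)).
Proof. by rewrite mxE. Qed.

Definition sel n N (g : 'I_n -> 'I_N) : 'M[C]_(N, n) := \matrix_(x', x) (x' == g x)%:R.

Lemma hadj_sel n N (g : 'I_n -> 'I_N) : hadj (sel g) = (sel g)^T.
Proof. by apply/matrixP => a b; rewrite !mxE conjC_nat. Qed.

Lemma hadj_selT n N (g : 'I_n -> 'I_N) : hadj (sel g)^T = sel g.
Proof. by apply/matrixP => a b; rewrite !mxE conjC_nat. Qed.

Lemma sel_conjE n N (g : 'I_n -> 'I_N) (M : 'M[C]_N) x y :
  (hadj (sel g) *m M *m sel g) x y = M (g x) (g y).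
Proof.
rewrite hadj_sel !mxE.
under eq_bigr do rewrite !mxE.
rewrite (bigD1 (g y)) //= [X in _ + X]big1 ?addr0; last first.
  by move=> z Hz; rewrite (negbTE Hz) mulr0.
rewrite eqxx mulr1.
under eq_bigr do rewrite !mxE.
rewrite (bigD1 (g x)) //= [X in _ + X]big1 ?addr0 ?eqxx ?mul1r //.
by move=> z Hz; rewrite (negbTE Hz) mul0r.
Qed.

Lemma selT_rowE n N (g : 'I_n -> 'I_N) (M : 'M[C]_n) x' y :
  (sel g *m M *m (sel g)^T) x' y = \sum_x ((x' == g x)%:R * (M *m (sel g)^T) x y).
Proof. by rewrite -mulmxA mxE; under eq_bigr do rewrite mxE. Qed.

Lemma selT_E n N (g : 'I_n -> 'I_N) (M : 'M[C]_n) x' y' :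
  (sel g *m M *m (sel g)^T) x' y' =
    \sum_x \sum_y ((x' == g x)%:R * M x y * (y' == g y)%:R).
Proof.
rewrite selT_rowE; apply: eq_bigr => x _; rewrite mxE mulr_sumr.
by apply: eq_bigr => y _; rewrite !mxE mulrA.
Qed.

Lemma sum_sel_inj n N (g : 'I_n -> 'I_N) (F : 'I_n -> C) x0 :
  injective g -> \sum_x ((g x0 == g x)%:R * F x) = F x0.
Proof.
move=> gi; rewrite (bigD1 x0) //= eqxx mul1r big1 ?addr0 // => x Hx.
by rewrite (inj_eq gi) eq_sym (negbTE Hx) mul0r.
Qed.

Lemma sum_sel_none n N (g : 'I_n -> 'I_N) (F : 'I_n -> C) x' :
  (forall x, x' != g x) -> \sum_x ((x' == g x)%:R * F x) = 0.
Proof. by move=> H; rewrite big1 // => x _; rewrite (negbTE (H x)) mul0r. Qed.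

Definition emb k m d (i : 'I_m) (x : 'I_(k * d)) : 'I_(k * (m * d)) :=
  mxtens_index ((mxtens_unindex x).1, mxtens_index (i, (mxtens_unindex x).2)).

Lemma emb_idx k m d (i : 'I_m) (a : 'I_k) (j : 'I_d) :
  emb i (mxtens_index (a, j)) = mxtens_index (a, mxtens_index (i, j)).
Proof. by rewrite /emb mxtens_indexK. Qed.

Lemma emb_inj k m d (i : 'I_m) : injective (@emb k m d i).
Proof.
move=> x y; rewrite -[x]mxtens_unindexK -[y]mxtens_unindexK.
case: (mxtens_unindex x) => a j; case: (mxtens_unindex y) => b l.
by rewrite !emb_idx => /idx_inj/pair_equal_spec [-> /idx_inj/pair_equal_spec [_ ->]].
Qed.

Lemma emb_none k m d (i i1 : 'I_m) (a : 'I_k) (j : 'I_d) x :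
  i1 != i -> mxtens_index (a, mxtens_index (i1, j)) != emb i x.
Proof.
move=> Hi; apply/negP => /eqP; rewrite -[x]mxtens_unindexK; case: (mxtens_unindex x) => b l.
by rewrite emb_idx => /idx_inj/pair_equal_spec [_ /idx_inj/pair_equal_spec [Hi1 _]]; rewrite Hi1 eqxx in Hi.
Qed.

Lemma selT_E2 n N (g : 'I_n -> 'I_N) (M : 'M[C]_n) x' y' :
  (sel g *m M *m (sel g)^T) x' y' =
    \sum_x ((x' == g x)%:R * \sum_y ((y' == g y)%:R * M x y)).
Proof.
rewrite selT_E; apply: eq_bigr => x _; rewrite mulr_sumr.
by apply: eq_bigr => y _; rewrite -mulrA [M x y * _]mulrC.
Qed.

Lemma tr_sum n (I : finType) (F : I -> 'M[C]_n) :
  \tr (\sum_i F i) = \sum_i \tr (F i).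
Proof. rewrite /mxtrace; under eq_bigr do rewrite summxE; exact: exchange_big. Qed.

Lemma sum_tens m n (F : 'I_(m * n) -> C) :
  \sum_x F x = \sum_a \sum_j F (mxtens_index (a, j)).
Proof.
rewrite (reindex (@mxtens_index m n)) /=; last first.
  by apply: onW_bij; exists (@mxtens_unindex m n); [exact: mxtens_indexK| exact: mxtens_unindexK].
by rewrite pair_big /=; apply: eq_bigr => -[a j].
Qed.

Lemma tr_tens m n (A : 'M[C]_m) (B : 'M[C]_n) : \tr (A *t B) = \tr A * \tr B.
Proof.
rewrite /mxtrace sum_tens mulr_suml; apply: eq_bigr => a _.
by rewrite mulr_sumr; apply: eq_bigr => j _; rewrite tensmxE.
Qed.

Lemma tr_blocks k d (Y : 'M[C]_(k * d)) : \tr Y = \sum_a \tr (block a a Y).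
Proof.
rewrite /mxtrace sum_tens; apply: eq_bigr => a _.
by apply: eq_bigr => j _; rewrite blockE.
Qed.

Lemma tensmxDr m n p q (A : 'M[C]_(m, n)) (B1 B2 : 'M[C]_(p, q)) :
  A *t (B1 + B2) = A *t B1 + A *t B2.
Proof. by apply/matrixP => x y; rewrite !mxE mulrDr. Qed.

Lemma tensmxZr m n p q (A : 'M[C]_(m, n)) (c : C) (B : 'M[C]_(p, q)) :
  A *t (c *: B) = c *: (A *t B).
Proof. by apply/matrixP => x y; rewrite !mxE mulrCA. Qed.

Lemma blockD k d (a b : 'I_k) (X Y : 'M[C]_(k * d)) :
  block a b (X + Y) = block a b X + block a b Y.
Proof. by apply/matrixP => u v; rewrite !mxE. Qed.

Lemma blockZ k d (a b : 'I_k) c (X : 'M[C]_(k * d)) :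
  block a b (c *: X) = c *: block a b X.
Proof. by apply/matrixP => u v; rewrite !mxE. Qed.

Lemma block_sum k d (a b : 'I_k) (I : finType) (F : I -> 'M[C]_(k * d)) :
  block a b (\sum_i F i) = \sum_i block a b (F i).
Proof. by apply/matrixP => u v; rewrite !mxE !summxE; apply: eq_bigr => i _; rewrite mxE. Qed.

Lemma block_Lambda m d1 d2 (F : 'I_m -> linmap R d1 d2) i X :
  block i i (Lambda F X) = F i X.
Proof.
apply/matrixP => u v; rewrite blockE /Lambda summxE.
under eq_bigr do rewrite tensmxE mxE andbb.
under eq_bigr do rewrite eq_sym.
exact: (sum_delta i (fun j => F j X u v)).
Qed.

Lemma block_psd k d (a : 'I_k) (Y : 'M[C]_(k * d)) : psd Y -> psd (block a a Y).
Proof.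
move=> HY; have -> : block a a Y =
  hadj (sel (fun u : 'I_d => mxtens_index (a, u))) *m Y *m sel (fun u : 'I_d => mxtens_index (a, u)).
  by apply/matrixP => u v; rewrite sel_conjE blockE.
exact: psd_conj.
Qed.

Lemma ampl_sum m k d1 d2 (F : 'I_m -> linmap R d1 d2) (X : 'M[C]_(k * d1)) :
  ampl (sum_maps F) X = \sum_i ampl (F i) X.
Proof.
apply/matrixP => x y; rewrite amplE /sum_maps !summxE.
by apply: eq_bigr => i _; rewrite amplE.
Qed.

Lemma Lambda_CP m d1 d2 (G : 'I_m -> linmap R d1 d2) :
  (forall i, is_CP (G i)) -> is_CP (Lambda G).
Proof.
move=> HG k X HX.
have -> : ampl (Lambda G) X =
   \sum_i (hadj (sel (@emb k m d2 i))^T *m ampl (G i) X *m (sel (@emb k m d2 i))^T).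
  apply/matrixP => x' y'.
  rewrite -[x']mxtens_unindexK; case: (mxtens_unindex x') => a x1.
  rewrite -[x1]mxtens_unindexK; case: (mxtens_unindex x1) => i1 j.
  rewrite -[y']mxtens_unindexK; case: (mxtens_unindex y') => b y1.
  rewrite -[y1]mxtens_unindexK; case: (mxtens_unindex y1) => i2 l.
  rewrite amplE2 /Lambda !summxE; apply: eq_bigr => i _.
  rewrite tensmxE mxE hadj_selT selT_E2.
  case: (eqVneq i1 i) => [<-|Hi1]; last first.
    rewrite /= mul0r sum_sel_none //.
    by move=> x; apply: emb_none.
  rewrite /= -emb_idx (sum_sel_inj _ _ (@emb_inj k m d2 i1)).
  case: (eqVneq i2 i1) => [<-|Hi2]; last first.
    rewrite /= mul0r sum_sel_none //.
    by move=> y; apply: emb_none.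
  by rewrite mul1r -emb_idx (sum_sel_inj _ _ (@emb_inj k m d2 i2)) amplE2.
apply: psd_sum => i; apply: psd_conj; exact: HG.
Qed.

Lemma Lambda_lin m d1 d2 (G : 'I_m -> linmap R d1 d2) :
  (forall i, is_linear (G i)) -> is_linear (Lambda G).
Proof.
move=> HG a X Y; rewrite /Lambda scaler_sumr -big_split /=.
by apply: eq_bigr => i _; rewrite HG tensmxDr tensmxZr.
Qed.

Lemma tr_delta m (i : 'I_m) : \tr (delta_mx i i : 'M[C]_m) = 1.
Proof.
rewrite /mxtrace (bigD1 i) //= mxE eqxx big1 ?addr0 // => j Hj.
by rewrite mxE (negbTE Hj).
Qed.

Lemma Lambda_TP m d1 d2 (G : 'I_m -> linmap R d1 d2) :
  is_TP (sum_maps G) -> is_TP (Lambda G).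
Proof.
move=> HG X; rewrite /Lambda tr_sum -(HG X) /sum_maps tr_sum.
by apply: eq_bigr => i _; rewrite tr_tens tr_delta mul1r.
Qed.

Lemma Lambda_channel m d1 d2 (G : 'I_m -> linmap R d1 d2) :
  instrument G -> channel (Lambda G).
Proof.
move=> [HG [_ _ HT]]; split.
- by apply: Lambda_lin => i; case: (HG i).
- by apply: Lambda_CP => i; case: (HG i).
- exact: Lambda_TP.
Qed.

Lemma mixc_ge0 (s : R) : 0 <= s -> 0 <= (1 + (s%:C)%C)^-1 :> C.
Proof.
move=> Hs; rewrite invr_ge0 addr_ge0 //.
by rewrite -(lecR 0 s) in Hs.
Qed.

Lemma mixc_neq0 (s : R) : 0 <= s -> (1 + (s%:C)%C) != 0 :> C.
Proof.
move=> Hs; rewrite gt_eqF // (lt_le_trans ltr01) // lerDl.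
by rewrite -(lecR 0 s) in Hs.
Qed.

Lemma ampl_mix k d1 d2 (s : R) (f g : linmap R d1 d2) (X : 'M[C]_(k * d1)) :
  ampl (mixmap s f g) X = (1 + (s%:C)%C)^-1 *: (ampl f X + (s%:C)%C *: ampl g X).
Proof. by apply/matrixP => x y; rewrite amplE !mxE !amplE. Qed.

Lemma mix_channel d1 d2 (s : R) (f g : linmap R d1 d2) :
  0 <= s -> channel f -> channel g -> channel (mixmap s f g).
Proof.
move=> Hs [Lf Cf Tf] [Lg Cg Tg]; split.
- move=> a X Y; rewrite /mixmap Lf Lg.
  rewrite !scalerDr !scalerA.
  set c := (1 + _)^-1.
  have -> : c * (s%:C%C * a) = a * c * s%:C%C by rewrite [s%:C%C * a]mulrC mulrA [c * a]mulrC.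
  by rewrite [c * a]mulrC addrACA.
- move=> k X HX; rewrite ampl_mix; apply: psd_scale; first exact: mixc_ge0.
  apply: psd_add; first exact: Cf.
  apply: psd_scale; last exact: Cg.
  by rewrite -(lecR 0 s) in Hs.
- move=> X; rewrite /mixmap mxtraceZ mxtraceD mxtraceZ Tf Tg.
  by rewrite -{1}(mul1r (\tr X)) -mulrDl mulrA mulVf ?mul1r // mixc_neq0.
Qed.

Lemma sum_mix m d1 d2 (s : R) (E G : 'I_m -> linmap R d1 d2) :
  sum_maps (fun i => mixmap s (E i) (G i)) = mixmap s (sum_maps E) (sum_maps G).
Proof.
apply: funext => X; rewrite /sum_maps /mixmap -scaler_sumr big_split /=.
by rewrite -scaler_sumr.
Qed.

Lemma Lambda_mix m d1 d2 (s : R) (E G : 'I_m -> linmap R d1 d2) :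
  Lambda (fun i => mixmap s (E i) (G i)) = mixmap s (Lambda E) (Lambda G).
Proof.
apply: funext => X; rewrite /Lambda /mixmap.
under eq_bigr do rewrite tensmxZr tensmxDr tensmxZr.
by rewrite -scaler_sumr big_split /= -scaler_sumr.
Qed.

Lemma channel_pos d1 d2 (f : linmap R d1 d2) : is_CP f -> is_positive f.
Proof.
move=> Hf X HX.
pose h := fun u : 'I_d1 => mxtens_index ((ord0 : 'I_1), u).
have hi : injective h by move=> u v /idx_inj/pair_equal_spec [_ ->].
pose Y := sel h *m X *m (sel h)^T.
have HY : psd Y by rewrite /Y -{1}(hadj_selT h); apply: psd_conj.
have HB : block ord0 ord0 Y = X.
  apply/matrixP => u v; rewrite blockE /Y selT_E2.
  rewrite (sum_sel_inj _ _ hi).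
  exact: (sum_sel_inj (fun y => X u y) v hi).
pose h2 := fun u : 'I_d2 => mxtens_index ((ord0 : 'I_1), u).
have -> : f X = hadj (sel h2) *m ampl f Y *m sel h2.
  by apply/matrixP => u v; rewrite sel_conjE amplE2 HB.
apply: psd_conj; exact: Hf.
Qed.

Lemma blockTh_CP m d1 d2 (Th : linmap R d1 (m * d2)) (i : 'I_m) :
  is_CP Th -> is_CP (fun X => block i i (Th X)).
Proof.
move=> HT k X HX.
have -> : ampl (fun X => block i i (Th X)) X =
    hadj (sel (@emb k m d2 i)) *m ampl Th X *m sel (@emb k m d2 i).
  apply/matrixP => x y; rewrite sel_conjE.
  rewrite -[x]mxtens_unindexK; case: (mxtens_unindex x) => a j.
  rewrite -[y]mxtens_unindexK; case: (mxtens_unindex y) => b l.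
  by rewrite !emb_idx !amplE2 blockE.
apply: psd_conj; exact: HT.
Qed.

Lemma blocks_instrument m d1 d2 (Th : linmap R d1 (m * d2)) :
  channel Th -> instrument (fun i X => block i i (Th X)).
Proof.
move=> [HL HC HT]; split.
- move=> i; split.
  + by move=> a X Y; rewrite HL blockD blockZ.
  + exact: blockTh_CP.
  + move=> X HX; rewrite -(HT X) (tr_blocks (Th X)) (bigD1 i) //= lerDl.
    apply: sumr_ge0 => j _; apply: psd_tr; apply: block_psd.
    exact: (channel_pos HC).
- split.
  + move=> a X Y; rewrite /sum_maps scaler_sumr -big_split /=.
    by apply: eq_bigr => i _; rewrite HL blockD blockZ.
  + move=> k X HX; rewrite ampl_sum; apply: psd_sum => i.
    exact: blockTh_CP.
  + by move=> X; rewrite /sum_maps tr_sum -tr_blocks HT.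
Qed.

Lemma feasible_iff m d1 d2 (Free : linmap R d1 d2 -> Prop)
  (E : 'I_m -> linmap R d1 d2) (HE : instrument E) (s : R) :
  feasible_inst Free E s <-> feasible_chan (@free_chan R m d1 d2 Free) (Lambda E) s.
Proof.
split.
- move=> [Hs [G [HG HF]]]; split => //.
  exists (Lambda G); split; first exact: Lambda_channel.
  exists (fun i => mixmap s (E i) (G i)); split => //; split.
    by rewrite sum_mix; apply: mix_channel => //; [case: HE| case: HG].
  by rewrite Lambda_mix.
- move=> [Hs [Th [HTh [E' [HF [HE' Heq]]]]]]; split => //.
  exists (fun i X => block i i (Th X)); split; first exact: blocks_instrument.
  move=> i.
  have -> : mixmap s (E i) (fun X => block i i (Th X)) = E' i; last exact: HF.
  apply: funext => X.
  rewrite -(block_Lambda E' i X) -Heq /mixmap blockZ blockD blockZ.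
  by rewrite block_Lambda.
Qed.

End H.


Unset Implicit Arguments.
Set Strict Implicit.
Theorem theorem16 (R : realType) (d1 d2 m : nat) (Hm : (0 < m)%N)
  (Free : linmap R d1 d2 -> Prop)
  (HFree : forall f, Free f -> CPTNI f)
  (E : 'I_m -> linmap R d1 d2) (HE : instrument E) :
  robustness_inst Free E = robustness_chan (@free_chan R m d1 d2 Free) (Lambda E).
Proof.
rewrite /robustness_inst /robustness_chan.
have -> : feasible_inst Free E = feasible_chan (@free_chan R m d1 d2 Free) (Lambda E).
  apply: funext => s; apply: propext; exact: feasible_iff.
by [].
Qed.
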